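(* Let $(\mathcal{C},\mathsf{I},\otimes,\lambda,\rho,\alpha)$ be a monoidal category with finite products, $\mathsf{T}=(T,\eta,\mu)$ a monoid in it, and $(\mathcal{E},\mathcal{M})$ an orthogonal factorization system on $\mathcal{C}$ such that: $\mathcal{E}$ is closed under $(-)\otimes S$ for every object $(S,s)$ of $\mathcal{M}/T$; the skew monoidal category $\mathcal{M}/\mathsf{T}=(\mathcal{M}/T,\mathsf{J},\boxdot)$ is monoidal; $\mathcal{E}$ contains all canonical morphisms $\langle\pi_i\otimes Y\rangle_i:(\prod_iX_i)\otimes Y\to\prod_i(X_i\otimes Y)$; and $\mathcal{E}$ is closed under finite products. Let $\phi:T^n\to T$ be an $n$-ary algebraic operation for $\mathsf{T}$ and $(R_1,r_1),\dots,(R_n,r_n)$ objects of $\mathcal{M}/T$. Factor $\phi\circ\prod_i r_i = r'\circ p$ with $p:\prod_iR_i\to R'$ in $\mathcal{E}$ and $r':R'\to T$ in $\mathcal{M}$. For each object $(S,s)$ of $\mathcal{M}/T$ let $\psi_S:\prod_i(R_i\boxdot S)\to R'\boxdot S$ be the unique morphism with $\psi_S\circ\prod_i q_{R_i,S}\circ\langle\pi_i\otimes S\rangle_i = q_{R',S}\circ(p\otimes S)$ and $(r'\boxdot s)\circ\psi_S = \phi\circ\prod_i(r_i\boxdot s)$. Then: (1) $\psi$ is an $(R_1,\dots,R_n;R')$-ary algebraic operation for the graded monoid $T_{\mathcal{M}}$, $\psi$ grades $\phi$, and every component $\psi_S$ is in $\mathcal{E}$. (2) For every object $(R'',r'')$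 of $\mathcal{M}/T$ and every $(R_1,\dots,R_n;R'')$-ary algebraic operation $\psi'$ for $T_{\mathcal{M}}$ that grades $\phi$, there is a unique morphism $f:(R',r')\to(R'',r'')$ in $\mathcal{M}/T$ such that $(f\boxdot S)\circ\psi_S=\psi'_S$ for all objects $S$ of $\mathcal{M}/T$.
   Context: Orthogonal factorization system $(\mathcal{E},\mathcal{M})$: both classes contain isomorphisms and are closed under composition; every commuting square $g e = m f$ with $e\in\mathcal{E}$, $m\in\mathcal{M}$ has a unique diagonal $d$ ($de=f$, $md=g$); every morphism factors as $m\circ e$. A monoid: $\eta:\mathsf{I}\to T$, $\mu:T\otimes T\to T$ with the usual unit and associativity laws. $\mathcal{M}/T$: objects $(S,s)$ with $s:S\to T$ in $\mathcal{M}$; morphisms $f:(S,s)\to(S',s')$ with $s'f=s$. Factor $\eta=j\circ q$ with $q:\mathsf{I}\to\mathsf{J}$ in $\mathcal{E}$, $j$ in $\mathcal{M}$; factor $\mu\circ(s\otimes s')=(s\boxdot s')\circ q_{S,S'}$ with $q_{S,S'}:S\otimes S'\to S\boxdot S'$ in $\mathcal{E}$, $s\boxdot s'$ in $\mathcal{M}$. This gives a skew monoidal structure $(\mathcal{M}/T,(\mathsf{J},j),\boxdot)$, denoted $\mathcal{M}/\mathsf{T}$, whose action on morphisms and structure maps are the unique diagonals compatible with the $q$'s and the structure maps of $\mathcal{C}$; in particular $f\boxdot f'$ is the unique morphism with $(f\boxdot f')q_{S_1,S_1'}=q_{S_2,S_2'}(f\otimes f')$ commuting with the maps to $T$, the right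 unitor is $r_S=q_{S,\mathsf{J}}\circ(S\otimes q)\circ\rho_S$, and the associator $a$ satisfies $a\,q_{S\boxdot S',S''}(q_{S,S'}\otimes S'')=q_{S,S'\boxdot S''}(S\otimes q_{S',S''})\alpha_{S,S',S''}$. The graded monoid (lax monoidal functor) $T_{\mathcal{M}}:\mathcal{M}/\mathsf{T}\to\mathcal{C}$ sends $(S,s)\mapsto S$ with unit $q$ and multiplication $q_{S,S'}$. An $n$-ary algebraic operation for $\mathsf{T}$ is $\phi:T^n\to T$ with $\phi\circ\mu^n\circ\langle\pi_i\otimes T\rangle_i=\mu\circ(\phi\otimes T)$. For a lax monoidal functor $(G,\eta^G,\mu^G):(\mathcal{G},I,\odot)\to\mathcal{C}$ from a monoidal category with associator $\alpha^{\mathcal{G}}$, a $(d_1,\dots,d_n;d')$-ary algebraic operation is a natural family $\psi_e:\prod_iG(d_i\odot e)\to G(d'\odot e)$ such that for all $e,e'$: $\psi_{e\odot e'}\circ\prod_iG(\alpha^{\mathcal{G}})\circ\prod_i\mu^G_{d_i\odot e,e'}\circ\langle\pi_i\otimes Ge'\rangle_i = G(\alpha^{\mathcal{G}})\circ\mu^G_{d'\odot e,e'}\circ(\psi_e\otimes Ge')$. For a grading with $\mathcal{M}$-components $g_d:Gd\to T$, $\psi$ grades $\phi$ if $g_{d'\odot e}\circ\psi_e=\phi\circ\prod_ig_{d_i\odot e}$ for all $e$; for $T_{\mathcal{M}}$, $g_{(S,s)}=s$. *)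

(* Defs.v *)
From mathcomp Require Import all_boot.
Set Implicit Arguments.
Unset Strict Implicit.
Unset Printing Implicit Defensive.

Declare Scope cat_scope.
Delimit Scope cat_scope with cat.
Open Scope cat_scope.

Record Cat := {
  Obj :> Type;
  Hom : Obj -> Obj -> Type;
  idm : forall A, Hom A A;
  comp : forall A B D, Hom B D -> Hom A B -> Hom A D;
  comp_idl : forall A B (f : Hom A B), comp (idm B) f = f;
  comp_idr : forall A B (f : Hom A B), comp f (idm A) = f;
  comp_assoc : forall A B D E (h : Hom D E) (g : Hom B D) (f : Hom A B),
      comp h (comp g f) = comp (comp h g) f }.
Arguments Hom {_} A B.
Arguments idm {_} A.
Arguments comp {_ A B D} g f.
Notation "g ∘ f" := (comp g f) (at level 40, left associativity) : cat_scope.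

Definition is_iso (C : Cat) (A B : C) (f : Hom A B) :=
  exists g : Hom B A, g ∘ f = idm A /\ f ∘ g = idm B.

Record Monoidal (C : Cat) := {
  tens : C -> C -> C;
  tensm : forall A B A' B', Hom A A' -> Hom B B' -> Hom (tens A B) (tens A' B');
  munit : C;
  lam : forall A, Hom (tens munit A) A;
  lam_inv : forall A, Hom A (tens munit A);
  rho : forall A, Hom A (tens A munit);
  rho_inv : forall A, Hom (tens A munit) A;
  alpha : forall A B D, Hom (tens (tens A B) D) (tens A (tens B D));
  alpha_inv : forall A B D, Hom (tens A (tens B D)) (tens (tens A B) D);
  tensm_id : forall A B, tensm (idm A) (idm B) = idm (tens A B);
  tensm_comp : forall A1 A2 A3 B1 B2 B3 (f : Hom A1 A2) (g : Hom A2 A3)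
      (f' : Hom B1 B2) (g' : Hom B2 B3),
      tensm (g ∘ f) (g' ∘ f') = tensm g g' ∘ tensm f f';
  lam_inv1 : forall A, lam A ∘ lam_inv A = idm A;
  lam_inv2 : forall A, lam_inv A ∘ lam A = idm (tens munit A);
  rho_inv1 : forall A, rho A ∘ rho_inv A = idm (tens A munit);
  rho_inv2 : forall A, rho_inv A ∘ rho A = idm A;
  alpha_inv1 : forall A B D, alpha A B D ∘ alpha_inv A B D = idm (tens A (tens B D));
  alpha_inv2 : forall A B D, alpha_inv A B D ∘ alpha A B D = idm (tens (tens A B) D);
  lam_nat : forall A B (f : Hom A B), f ∘ lam A = lam B ∘ tensm (idm munit) f;
  rho_nat : forall A B (f : Hom A B), rho B ∘ f = tensm f (idm munit) ∘ rho A;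
  alpha_nat : forall A A' B B' D D' (f : Hom A A') (g : Hom B B') (h : Hom D D'),
      alpha A' B' D' ∘ tensm (tensm f g) h = tensm f (tensm g h) ∘ alpha A B D;
  triangle : forall A B,
      tensm (idm A) (lam B) ∘ alpha A munit B = tensm (rho_inv A) (idm B);
  pentagon : forall A B D E,
      alpha A B (tens D E) ∘ alpha (tens A B) D E
      = tensm (idm A) (alpha B D E) ∘ alpha A (tens B D) E ∘ tensm (alpha A B D) (idm E) }.
Arguments tens {_} _ A B.
Arguments tensm {_} _ {A B A' B'} f g.
Arguments munit {_} _.
Arguments lam {_} _ A.
Arguments rho {_} _ A.
Arguments alpha {_} _ A B D.

Record FinProducts (C : Cat) := {
  prodo : forall n, ('I_n -> C) -> C;
  pr : forall n (X : 'I_n -> C) (i : 'I_n), Hom (prodo X) (X i);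
  ptuple : forall n (X : 'I_n -> C) (Y : C), (forall i, Hom Y (X i)) -> Hom Y (prodo X);
  pr_ptuple : forall n (X : 'I_n -> C) Y (f : forall i, Hom Y (X i)) i,
      pr X i ∘ ptuple f = f i;
  ptuple_unique : forall n (X : 'I_n -> C) Y (f : forall i, Hom Y (X i))
      (g : Hom Y (prodo X)), (forall i, pr X i ∘ g = f i) -> g = ptuple f }.
Arguments prodo {_} _ {n} X.
Arguments pr {_} _ {n} X i.
Arguments ptuple {_} _ {n X Y} f.

Record OFS (C : Cat) := {
  Ecl : forall A B : C, Hom A B -> Prop;
  Mcl : forall A B : C, Hom A B -> Prop;
  E_iso : forall A B (f : Hom A B), is_iso f -> Ecl f;
  M_iso : forall A B (f : Hom A B), is_iso f -> Mcl f;
  E_comp : forall A B D (f : Hom A B) (g : Hom B D), Ecl f -> Ecl g -> Ecl (g ∘ f);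
  M_comp : forall A B D (f : Hom A B) (g : Hom B D), Mcl f -> Mcl g -> Mcl (g ∘ f);
  diag_unique : forall A B X Y (e : Hom A B) (m : Hom X Y) (f : Hom A X) (g : Hom B Y),
      Ecl e -> Mcl m -> g ∘ e = m ∘ f -> exists! d : Hom B X, d ∘ e = f /\ m ∘ d = g;
  fobj : forall A B : C, Hom A B -> C;
  fe : forall A B (f : Hom A B), Hom A (fobj f);
  fm : forall A B (f : Hom A B), Hom (fobj f) B;
  fe_E : forall A B (f : Hom A B), Ecl (fe f);
  fm_M : forall A B (f : Hom A B), Mcl (fm f);
  fm_fe : forall A B (f : Hom A B), fm f ∘ fe f = f }.
Arguments Ecl {_} _ {A B} f.
Arguments Mcl {_} _ {A B} f.
Arguments fobj {_} _ {A B} f.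
Arguments fe {_} _ {A B} f.
Arguments fm {_} _ {A B} f.
Arguments fm_M {_} _ {A B} f.

Section Slice.
Variables (C : Cat) (MC : Monoidal C) (P : FinProducts C) (F : OFS C).
Local Notation "A ⊗ B" := (tens MC A B) (at level 30).
Local Notation "f ⊗m g" := (tensm MC f g) (at level 30).
Local Notation I := (munit MC).
Local Notation E := (Ecl F).
Local Notation M := (Mcl F).

Definition prodm n (X Y : 'I_n -> C) (f : forall i, Hom (X i) (Y i))
  : Hom (prodo P X) (prodo P Y) := ptuple P (fun i => f i ∘ pr P X i).
Definition canmap n (X : 'I_n -> C) (Y : C)
  : Hom (prodo P X ⊗ Y) (prodo P (fun i => X i ⊗ Y)) :=
  ptuple P (fun i => pr P X i ⊗m idm Y).
Definition powo n (A : C) : C := prodo P (fun _ : 'I_n => A).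

Definition E_canmaps := forall n (X : 'I_n -> C) (Y : C), E (canmap X Y).
Definition E_closed_prod := forall n (X Y : 'I_n -> C) (f : forall i, Hom (X i) (Y i)),
  (forall i, E (f i)) -> E (prodm f).

Variables (T : C) (eta : Hom I T) (mu : Hom (T ⊗ T) T).

Definition is_monoid :=
  [/\ mu ∘ (eta ⊗m idm T) = lam MC T,
      mu ∘ (idm T ⊗m eta) ∘ rho MC T = idm T
    & mu ∘ (mu ⊗m idm T) = mu ∘ (idm T ⊗m mu) ∘ alpha MC T T T].

Definition is_alg_op n (phi : Hom (powo n T) T) :=
  phi ∘ @prodm n (fun _ => T ⊗ T) (fun _ => T) (fun _ => mu)
      ∘ canmap (fun _ : 'I_n => T) T
  = mu ∘ (phi ⊗m idm T).

Record MObj := MkMObj { mcar : C; mmap : Hom mcar T; mmap_M : M mmap }.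

Definition is_slice_mor (S S' : MObj) (f : Hom (mcar S) (mcar S')) :=
  mmap S' ∘ f = mmap S.

Definition Jo : MObj := @MkMObj (fobj F eta) (fm F eta) (fm_M F eta).
Definition q : Hom I (mcar Jo) := fe F eta.

Definition boxfac (S S' : MObj) : Hom (mcar S ⊗ mcar S') T := mu ∘ (mmap S ⊗m mmap S').
Definition box (S S' : MObj) : MObj :=
  @MkMObj (fobj F (boxfac S S')) (fm F (boxfac S S')) (fm_M F (boxfac S S')).
Definition qb (S S' : MObj) : Hom (mcar S ⊗ mcar S') (mcar (box S S')) :=
  fe F (boxfac S S').

(* g = f ⊠ f' (characterizing property of the unique diagonal) *)
Definition is_boxm (S1 S1' S2 S2' : MObj) (f : Hom (mcar S1) (mcar S2))
  (f' : Hom (mcar S1') (mcar S2')) (g : Hom (mcar (box S1 S1')) (mcar (box S2 S2'))) :=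
  g ∘ qb S1 S1' = qb S2 S2' ∘ (f ⊗m f') /\ mmap (box S2 S2') ∘ g = mmap (box S1 S1').

Definition is_lunit (S : MObj) (l : Hom (mcar (box Jo S)) (mcar S)) :=
  l ∘ qb Jo S ∘ (q ⊗m idm (mcar S)) = lam MC (mcar S) /\ mmap S ∘ l = mmap (box Jo S).
Definition runit (S : MObj) : Hom (mcar S) (mcar (box S Jo)) :=
  qb S Jo ∘ (idm (mcar S) ⊗m q) ∘ rho MC (mcar S).
Definition is_assoc (S S' S'' : MObj)
  (a : Hom (mcar (box (box S S') S'')) (mcar (box S (box S' S'')))) :=
  a ∘ qb (box S S') S'' ∘ (qb S S' ⊗m idm (mcar S''))
    = qb S (box S' S'') ∘ (idm (mcar S) ⊗m qb S' S'') ∘ alpha MC (mcar S) (mcar S') (mcar S'')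
  /\ mmap (box S (box S' S'')) ∘ a = mmap (box (box S S') S'').

Definition skew_slice_is_monoidal :=
  [/\ forall S, exists l, @is_lunit S l /\ is_iso l,
      forall S, is_iso (runit S)
    & forall S S' S'', exists a, @is_assoc S S' S'' a /\ is_iso a].

Definition E_closed_tens_slice :=
  forall (S : MObj) (A B : C) (e : Hom A B), E e -> E (e ⊗m idm (mcar S)).

Definition is_graded_alg_op n (R : 'I_n -> MObj) (R' : MObj)
  (psi : forall S : MObj, Hom (prodo P (fun i => mcar (box (R i) S))) (mcar (box R' S))) :=
  (forall (S1 S2 : MObj) (f : Hom (mcar S1) (mcar S2)), @is_slice_mor S1 S2 f ->
     forall (g : forall i, Hom (mcar (box (R i) S1)) (mcar (box (R i) S2)))
            (g' : Hom (mcar (box R' S1)) (mcar (box R' S2))),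
     (forall i, @is_boxm (R i) S1 (R i) S2 (idm (mcar (R i))) f (g i)) ->
     @is_boxm R' S1 R' S2 (idm (mcar R')) f g' ->
     g' ∘ psi S1 = psi S2 ∘ prodm g)
  /\
  (forall (S S' : MObj)
     (a : forall i, Hom (mcar (box (box (R i) S) S')) (mcar (box (R i) (box S S'))))
     (a' : Hom (mcar (box (box R' S) S')) (mcar (box R' (box S S')))),
     (forall i, is_assoc (a i)) -> is_assoc a' ->
     psi (box S S') ∘ prodm a ∘ prodm (fun i => qb (box (R i) S) S')
       ∘ canmap (fun i => mcar (box (R i) S)) (mcar S')
     = a' ∘ qb (box R' S) S' ∘ (psi S ⊗m idm (mcar S'))).

Definition grades n (R : 'I_n -> MObj) (R' : MObj)
  (psi : forall S : MObj, Hom (prodo P (fun i => mcar (box (R i) S))) (mcar (box R' S)))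
  (phi : Hom (powo n T) T) :=
  forall S : MObj, mmap (box R' S) ∘ psi S = phi ∘ prodm (fun i => mmap (box (R i) S)).

End Slice.

(* Main.v *)
Require Import Defs.
From mathcomp Require Import all_boot.
From Stdlib Require Import IndefiniteDescription.
Set Implicit Arguments.
Unset Strict Implicit.
Unset Printing Implicit Defensive.

Section Gen.
Variables (C : Cat) (MC : Monoidal C) (P : FinProducts C) (F : OFS C).
Local Notation "f ⊗m g" := (tensm MC f g) (at level 30).

Lemma rw2 (A B D E : C) (a : Hom D E) (b : Hom B D) (c : Hom B E) :
  a ∘ b = c -> forall (k : Hom A B), a ∘ (b ∘ k) = c ∘ k.
Proof. by move=> <- k; rewrite comp_assoc. Qed.

Lemma cancel_EM (A B X Y : C) (e : Hom A B) (m : Hom X Y) (u v : Hom B X) :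
  Ecl F e -> Mcl F m -> u ∘ e = v ∘ e -> m ∘ u = m ∘ v -> u = v.
Proof.
move=> He Hm Hue Hmu.
have [d [_ Hd]] := diag_unique He Hm (f := u ∘ e) (g := m ∘ u) (esym (comp_assoc _ _ _)).
rewrite -(Hd u (conj erefl erefl)) (Hd v) //.
Qed.

Lemma E_cancel (A B D : C) (e : Hom A B) (g : Hom B D) :
  Ecl F e -> Ecl F (g ∘ e) -> Ecl F g.
Proof.
move=> He Hge.
have Hfac := fm_fe F g.
have Hm : Mcl F (fm F g) := fm_M F g.
have He' : Ecl F (fe F g ∘ e) := E_comp He (fe_E F g).
have Hsq : idm D ∘ (g ∘ e) = fm F g ∘ (fe F g ∘ e) by rewrite comp_idl comp_assoc Hfac.
have [d [[Hd1 Hd2] _]] := diag_unique Hge Hm Hsq.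
have Hdm : d ∘ fm F g = idm _.
  have [d' [_ Hu]] := diag_unique He' Hm (f := fe F g ∘ e) (g := fm F g) erefl.
  rewrite -(Hu (d ∘ fm F g)); last first.
    split; last by rewrite comp_assoc Hd2 comp_idl.
    by rewrite -comp_assoc (comp_assoc (fm F g)) Hfac.
  by apply: Hu; rewrite comp_idl comp_idr.
suff: Ecl F (fm F g ∘ fe F g) by rewrite Hfac.
apply: E_comp (fe_E F g) _.
apply: E_iso; exists d; split => //.
Qed.

Lemma prod_ext n (X : 'I_n -> C) (Y : C) (u v : Hom Y (prodo P X)) :
  (forall i, pr P X i ∘ u = pr P X i ∘ v) -> u = v.
Proof.
move=> H.
have H1 := @ptuple_unique C P n X Y (fun i => pr P X i ∘ v) u H.
have H2 := @ptuple_unique C P n X Y (fun i => pr P X i ∘ v) v (fun i => erefl).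
exact: (etrans H1 (esym H2)).
Qed.

Lemma pr_prodm n (X Y : 'I_n -> C) (f : forall i, Hom (X i) (Y i)) i :
  pr P Y i ∘ prodm P f = f i ∘ pr P X i.
Proof. by rewrite /prodm pr_ptuple. Qed.

Lemma prodm_comp n (X Y Z : 'I_n -> C) (f : forall i, Hom (X i) (Y i))
  (g : forall i, Hom (Y i) (Z i)) :
  prodm P g ∘ prodm P f = prodm P (fun i => g i ∘ f i).
Proof.
apply: prod_ext => i.
by rewrite comp_assoc !pr_prodm -comp_assoc pr_prodm comp_assoc.
Qed.

Lemma pr_canmap n (X : 'I_n -> C) (Y : C) i :
  pr P _ i ∘ canmap MC P X Y = pr P X i ⊗m idm Y.
Proof. by rewrite /canmap pr_ptuple. Qed.

Lemma canmap_nat n (X Y : 'I_n -> C) (A B : C) (g : forall i, Hom (X i) (Y i))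
  (f : Hom A B) :
  canmap MC P Y B ∘ (prodm P g ⊗m f) = prodm P (fun i => g i ⊗m f) ∘ canmap MC P X A.
Proof.
apply: prod_ext => i.
rewrite !comp_assoc pr_canmap pr_prodm -comp_assoc pr_canmap -!tensm_comp.
by rewrite pr_prodm !comp_idl !comp_idr.
Qed.

Lemma tens_interch (A A' B B' : C) (f : Hom A A') (g : Hom B B') :
  (f ⊗m idm B') ∘ (idm A ⊗m g) = (idm A' ⊗m g) ∘ (f ⊗m idm B).
Proof. by rewrite -!tensm_comp !comp_idl !comp_idr. Qed.

Lemma prodm_ext n (X Y : 'I_n -> C) (f g : forall i, Hom (X i) (Y i)) :
  (forall i, f i = g i) -> prodm P f = prodm P g.
Proof. by move=> H; apply: prod_ext => i; rewrite !pr_prodm H. Qed.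

Lemma prodm_id n (X : 'I_n -> C) : prodm P (fun i => idm (X i)) = idm _.
Proof. by apply: prod_ext => i; rewrite pr_prodm comp_idl comp_idr. Qed.

Lemma canmap_natr n (X : 'I_n -> C) (A B : C) (f : Hom A B) :
  prodm P (fun i => idm (X i) ⊗m f) ∘ canmap MC P X A = canmap MC P X B ∘ (idm _ ⊗m f).
Proof. by rewrite -(prodm_id X) canmap_nat. Qed.

Lemma tens_compl (A1 A2 A3 B B' : C) (f : Hom A2 A3) (g : Hom A1 A2) (h : Hom B B') :
  (f ∘ g) ⊗m h = (f ⊗m idm B') ∘ (g ⊗m h).
Proof. by rewrite -tensm_comp comp_idl. Qed.

Lemma canmap_alpha n (X : 'I_n -> C) (A B : C) :
  prodm P (fun i => alpha MC (X i) A B) ∘ canmap MC P (fun i => tens MC (X i) A) B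
    ∘ (canmap MC P X A ⊗m idm B)
  = canmap MC P X (tens MC A B) ∘ alpha MC (prodo P X) A B.
Proof.
apply: prod_ext => i.
rewrite !comp_assoc pr_prodm pr_canmap.
rewrite -!comp_assoc. rewrite (rw2 (pr_canmap _ _ _)) -tensm_comp comp_idl pr_canmap.
by rewrite (alpha_nat MC) tensm_id.
Qed.

End Gen.

Lemma rw3 (C : Cat) (A B D E G : C) (a : Hom E G) (b : Hom D E) (c : Hom B D) (d : Hom B G) :
  a ∘ b ∘ c = d -> forall (k : Hom A B), a ∘ (b ∘ (c ∘ k)) = d ∘ k.
Proof. by move=> <- k; rewrite !comp_assoc. Qed.
Lemma rw3e (C : Cat) (B D E G : C) (a : Hom E G) (b : Hom D E) (c : Hom B D) (d : Hom B G) :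
  a ∘ b ∘ c = d -> a ∘ (b ∘ c) = d.
Proof. by move=> <-; rewrite !comp_assoc. Qed.
Lemma rw4 (C : Cat) (A B D E G H : C) (a : Hom G H) (a' : Hom E G) (b : Hom D E) (c : Hom B D) (d : Hom B H) :
  a ∘ a' ∘ b ∘ c = d -> forall (k : Hom A B), a ∘ (a' ∘ (b ∘ (c ∘ k))) = d ∘ k.
Proof. by move=> <- k; rewrite !comp_assoc. Qed.
Lemma rw4e (C : Cat) (B D E G H : C) (a : Hom G H) (a' : Hom E G) (b : Hom D E) (c : Hom B D) (d : Hom B H) :
  a ∘ a' ∘ b ∘ c = d -> a ∘ (a' ∘ (b ∘ c)) = d.
Proof. by move=> <-; rewrite !comp_assoc. Qed.

Ltac rassoc := repeat rewrite -comp_assoc.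
Ltac crw H := rassoc; first [rewrite (rw4 H) | rewrite (rw4e H) | rewrite (rw3 H)
  | rewrite (rw3e H) | rewrite (rw2 H) | rewrite H]; rassoc.

Section Slice2.
Variables (C : Cat) (MC : Monoidal C) (P : FinProducts C) (F : OFS C).
Variables (T : C) (eta : Hom (munit MC) T) (mu : Hom (tens MC T T) T).
Local Notation "f ⊗m g" := (tensm MC f g) (at level 30).
Local Notation MO := (MObj F T).
Local Notation J := (@Jo C MC F T eta).

Lemma tensl_comp (A1 A2 A3 B : C) (f : Hom A1 A2) (g : Hom A2 A3) :
  (g ∘ f) ⊗m idm B = (g ⊗m idm B) ∘ (f ⊗m idm B).
Proof. by rewrite -tensm_comp comp_idl. Qed.
Lemma tensr_comp (A B1 B2 B3 : C) (f : Hom B1 B2) (g : Hom B2 B3) :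
  idm A ⊗m (g ∘ f) = (idm A ⊗m g) ∘ (idm A ⊗m f).
Proof. by rewrite -tensm_comp comp_idl. Qed.
Lemma tens_split (A A' B B' : C) (f : Hom A A') (g : Hom B B') :
  f ⊗m g = (idm A' ⊗m g) ∘ (f ⊗m idm B).
Proof. by rewrite -tensm_comp comp_idl comp_idr. Qed.
Lemma tens_split' (A A' B B' : C) (f : Hom A A') (g : Hom B B') :
  f ⊗m g = (f ⊗m idm B') ∘ (idm A ⊗m g).
Proof. by rewrite -tensm_comp comp_idl comp_idr. Qed.

Lemma mq (S S' : MO) : mmap (box mu S S') ∘ qb mu S S' = mu ∘ (mmap S ⊗m mmap S').
Proof. exact: fm_fe. Qed.

Lemma jq : mmap J ∘ @q C MC F T eta = eta.
Proof. exact: fm_fe. Qed.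

Lemma boxm_exists (S1 S1' S2 S2' : MO) (f : Hom (mcar S1) (mcar S2))
  (f' : Hom (mcar S1') (mcar S2')) :
  is_slice_mor f -> is_slice_mor f' -> exists g, is_boxm (mu := mu) f f' g.
Proof.
move=> Hf Hf'.
have Hsq : mmap (box mu S1 S1') ∘ qb mu S1 S1' = mmap (box mu S2 S2') ∘ (qb mu S2 S2' ∘ (f ⊗m f')).
  by rewrite comp_assoc !mq -comp_assoc -tensm_comp Hf Hf'.
have [d [[H1 H2] _]] := diag_unique (fe_E F _) (fm_M F _) Hsq.
by exists d; split.
Qed.

Lemma mmap_runit (HT : is_monoid eta mu) (S : MO) :
  mmap (box mu S J) ∘ runit eta mu S = mmap S.
Proof.
case: HT => _ HT2 _.
rewrite /runit; crw (mq S J).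
rewrite (rw2 (esym (tensm_comp _ _ _ _ _))) comp_idr jq.
rewrite (tens_split (mmap S) eta); rassoc.
rewrite -(rho_nat MC (mmap S)).
by rewrite !comp_assoc HT2 comp_idl.
Qed.

Lemma runit_nat (S1 S2 : MO) (f : Hom (mcar S1) (mcar S2)) g :
  is_boxm (S1 := S1) (S1' := J) (S2 := S2) (S2' := J) (mu := mu) f (idm _) g ->
  g ∘ runit eta mu S1 = runit eta mu S2 ∘ f.
Proof.
case=> Hg _; rewrite /runit.
crw Hg.
rewrite (rw2 (esym (tensm_comp _ _ _ _ _))) comp_idl comp_idr.
rewrite (tens_split f (@q C MC F T eta)); rassoc.
by rewrite -(rho_nat MC f).
Qed.


Lemma triangle_slice (X S : MO) l a B :
  is_lunit (eta := eta) (mu := mu) (S := S) l ->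
  is_assoc (S := X) (S' := J) (S'' := S) (mu := mu) a ->
  is_boxm (S1 := X) (S1' := box mu J S) (S2 := X) (S2' := S) (mu := mu) (idm _) l B ->
  B ∘ a ∘ qb mu (box mu X J) S ∘ (runit eta mu X ⊗m idm (mcar S)) = qb mu X S.
Proof.
move=> [Hl _] [Ha _] [HB _].
rewrite /runit !tensl_comp.
crw Ha. crw HB.
rewrite (rw2 (alpha_nat MC _ _ _)); rassoc.
rewrite (rw2 (esym (tensr_comp _ _ _))).
rewrite (rw2 (esym (tensr_comp _ _ _))).
rewrite Hl. crw (triangle MC (mcar X) (mcar S)).
by rewrite -tensl_comp rho_inv2 tensm_id comp_idr.
Qed.

End Slice2.

Theorem theorem5p6
  (C : Cat) (MC : Monoidal C) (P : FinProducts C) (F : OFS C)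
  (T : C) (eta : Hom (munit MC) T) (mu : Hom (tens MC T T) T)
  (HT : is_monoid eta mu)
  (HEtens : E_closed_tens_slice MC F T)
  (Hmon : skew_slice_is_monoidal F eta mu)
  (HEcan : E_canmaps MC P F)
  (HEprod : E_closed_prod P F)
  (n : nat) (phi : Hom (powo P n T) T) (Hphi : is_alg_op mu phi)
  (R : 'I_n -> MObj F T)
  (R' : C) (p : Hom (prodo P (fun i => mcar (R i))) R') (r' : Hom R' T)
  (Hp : Ecl F p) (Hr' : Mcl F r')
  (Hfac : r' ∘ p = phi ∘ prodm P (fun i => mmap (R i)))
  (psi : forall S : MObj F T,
     Hom (prodo P (fun i => mcar (box mu (R i) S))) (mcar (box mu (MkMObj Hr') S)))
  (Hpsi : forall S : MObj F T,
     psi S ∘ prodm P (fun i => qb mu (R i) S) ∘ canmap MC P (fun i => mcar (R i)) (mcar S)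
       = qb mu (MkMObj Hr') S ∘ tensm MC p (idm (mcar S))
     /\ mmap (box mu (MkMObj Hr') S) ∘ psi S
       = phi ∘ prodm P (fun i => mmap (box mu (R i) S))) :
  (* (1) *)
  (is_graded_alg_op psi /\ grades psi phi /\ (forall S : MObj F T, Ecl F (psi S)))
  /\
  (* (2) *)
  (forall (R'' : MObj F T)
          (psi' : forall S : MObj F T,
             Hom (prodo P (fun i => mcar (box mu (R i) S))) (mcar (box mu R'' S))),
     is_graded_alg_op psi' -> grades psi' phi ->
     exists! f : Hom R' (mcar R''),
       @is_slice_mor C F T (MkMObj Hr') R'' f /\
       (forall (S : MObj F T)
               (g : Hom (mcar (box mu (MkMObj Hr') S)) (mcar (box mu R'' S))),
          @is_boxm C MC F T mu (MkMObj Hr') S R'' S f (idm (mcar S)) g ->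
          g ∘ psi S = psi' S)).
Proof.
pose e S := prodm P (fun i => qb mu (R i) S) ∘ canmap MC P (fun i => mcar (R i)) (mcar S).
have He : forall S, Ecl F (e S).
  move=> S; apply: E_comp; first exact: HEcan.
  by apply: HEprod => i; exact: fe_E.
have Hpsi1 : forall S, psi S ∘ e S = qb mu (MkMObj Hr') S ∘ tensm MC p (idm (mcar S)).
  by move=> S; rewrite /e comp_assoc; exact: (Hpsi S).1.
split.
  split; [split|split].
  - move=> S1 S2 f Hf g g' Hg Hg'.
    apply: (cancel_EM (He S1) (fm_M F _)).
      rewrite -comp_assoc Hpsi1.
      crw (Hg').1.
      rewrite -tens_interch /e; rassoc.
      rewrite (rw2 (prodm_comp P _ _)).
      rewrite (prodm_ext P (fun i => (Hg i).1)).
      rewrite -prodm_comp; rassoc.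
      rewrite canmap_natr.
      by crw (Hpsi S2).1.
    rewrite comp_assoc (Hg').2 (Hpsi S1).2 comp_assoc (Hpsi S2).2 -comp_assoc prodm_comp.
    by congr (phi ∘ _); apply: prodm_ext => i; rewrite (Hg i).2.
  - move=> S S' a a' Ha Ha'.
    apply: (cancel_EM (HEtens S' _ _ _ (He S)) (fm_M F _)).
      transitivity (qb mu (MkMObj Hr') (box mu S S') ∘ tensm MC (idm _) (qb mu S S')
                    ∘ tensm MC p (idm _) ∘ alpha MC _ _ _).
        rewrite /e tensl_comp; rassoc.
        rewrite (rw2 (canmap_nat MC P _ _)); rassoc.
        rewrite (rw2 (prodm_comp P _ _)).
        rewrite (rw2 (prodm_comp P _ _)).
        rewrite (prodm_ext P (fun i => (Ha i).1)).
        rewrite -!prodm_comp; rassoc.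
        crw (canmap_alpha MC P (fun i => mcar (R i)) (mcar S) (mcar S')).
        rewrite (rw2 (canmap_natr MC P _ _)).
        crw (Hpsi (box mu S S')).1.
        by rewrite (rw2 (tens_interch MC p (qb mu S S'))) -!comp_assoc.
      symmetry; rassoc; rewrite -tensl_comp Hpsi1 tensl_comp.
      crw (Ha').1.
      by rewrite (alpha_nat MC _ _ _) tensm_id.
    transitivity (phi ∘ prodm P (fun i => mu ∘ tensm MC (mmap (box mu (R i) S)) (mmap S'))
                  ∘ canmap MC P (fun i => mcar (box mu (R i) S)) (mcar S')).
      rewrite !comp_assoc (Hpsi _).2; rassoc.
      rewrite (rw2 (prodm_comp P _ _)).
      rewrite (rw2 (prodm_comp P _ _)).
      congr (_ ∘ (_ ∘ _)); apply: prodm_ext => i.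
      by rewrite comp_assoc (Ha i).2 mq.
    symmetry; rewrite !comp_assoc (Ha').2 mq -comp_assoc -tensm_comp (Hpsi S).2 comp_idr.
    rewrite tens_compl comp_assoc -Hphi; rassoc.
    rewrite (canmap_nat MC P _ _); rassoc.
    by rewrite (rw2 (prodm_comp P _ _)) !comp_assoc.
  - by move=> S; exact: (Hpsi S).2.
  - move=> S; apply: (E_cancel (He S)); rewrite Hpsi1; apply: E_comp.
      exact: (HEtens S _ _ _ Hp).
    exact: fe_E.
move=> R'' psi' [Hnat Hass] Hgr.
case: Hmon => Hl Hr Ha.
have [ri [Hri1 Hri2]] := Hr R''.
have Hids : forall X : MObj F T, is_slice_mor (idm (mcar X)).
  by move=> X; rewrite /is_slice_mor comp_idr.
pose h := ri ∘ psi' (Jo F eta) ∘ prodm P (fun i => runit eta mu (R i)).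
have Hr''ri : mmap R'' ∘ ri = mmap (box mu R'' (Jo F eta)).
  by rewrite -{1}(mmap_runit HT R'') -comp_assoc Hri2 comp_idr.
have Hsq : r' ∘ p = mmap R'' ∘ h.
  rewrite Hfac /h !comp_assoc Hr''ri (Hgr _) -comp_assoc prodm_comp.
  by congr (phi ∘ _); apply: prodm_ext => i; rewrite mmap_runit.
have [f0 [[Hf0p Hf0m] Hf0u]] := diag_unique Hp (mmap_M R'') Hsq.
have HL : psi (Jo F eta) ∘ prodm P (fun i => runit eta mu (R i))
          = runit eta mu (MkMObj Hr') ∘ p.
  have -> : prodm P (fun i => runit eta mu (R i))
     = prodm P (fun i => qb mu (R i) (Jo F eta))
       ∘ (canmap MC P (fun i => mcar (R i)) (mcar (Jo F eta))
          ∘ (tensm MC (idm _) (q F eta) ∘ rho MC _)).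
    apply: prod_ext => i; rewrite pr_prodm /runit; rassoc.
    rewrite (rw2 (pr_prodm P _ _)); rassoc; rewrite (rw2 (pr_canmap MC P _ _ _)); rassoc.
    rewrite (rw2 (tens_interch MC _ _)).
    by rassoc; rewrite -(rho_nat MC).
  crw (Hpsi (Jo F eta)).1.
  rewrite (rw2 (tens_interch MC p (q F eta))); rassoc.
  by rewrite -(rho_nat MC p) /runit; rassoc.
exists f0; split.
  split; first exact: Hf0m.
  move=> S g Hg.
  apply: (cancel_EM (He S) (fm_M F _)); last first.
    by rewrite comp_assoc Hg.2 (Hpsi S).2 Hgr.
  rewrite -comp_assoc Hpsi1; crw Hg.1.
  rewrite -tensl_comp Hf0p.
  have [l [Hl1 _]] := Hl S.
  have Hls : is_slice_mor (S := box mu (Jo F eta) S) (S' := S) l := Hl1.2.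
  have HB : forall i, exists B, is_boxm (mu := mu) (S1 := R i) (S1' := box mu (Jo F eta) S)
                                  (S2 := R i) (S2' := S) (idm _) l B.
    move=> i; apply: (boxm_exists mu (Hids (R i)) Hls).
  pose B i := proj1_sig (constructive_indefinite_description _ (HB i)).
  have HBi : forall i, is_boxm (idm _) l (B i).
    by move=> i; exact: (proj2_sig (constructive_indefinite_description _ (HB i))).
  pose a i := proj1_sig (constructive_indefinite_description _ (Ha (R i) (Jo F eta) S)).
  have Hai : forall i, is_assoc (a i).
    by move=> i; exact: (proj2_sig (constructive_indefinite_description _ (Ha (R i) (Jo F eta) S))).1.
  have [B'' HB''] := boxm_exists mu (Hids R'') Hls.
  have [a'' [Ha'' _]] := Ha R'' (Jo F eta) S.
  have N := Hnat _ _ l Hls B B'' HBi HB''.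
  have A := Hass (Jo F eta) S a a'' Hai Ha''.
  have Tr := triangle_slice Hl1 Ha'' HB''.
  have Tri := fun i => triangle_slice Hl1 (Hai i) (HBi i).
  rewrite -Tr -comp_assoc -tensl_comp /h !comp_assoc Hri2 comp_idl tensl_comp; rassoc.
  crw (esym A).
  crw N.
  rewrite canmap_nat; rassoc.
  rewrite (rw2 (prodm_comp P _ _)).
  rewrite (rw2 (prodm_comp P _ _)).
  rewrite (rw2 (prodm_comp P _ _)).
  by rewrite (prodm_ext P Tri).
move=> f1 [Hf1m Hf1g].
apply: (cancel_EM Hp (mmap_M R'')); last by rewrite Hf0m Hf1m.
rewrite Hf0p.
have [g1 Hg1] := boxm_exists mu (S1 := MkMObj Hr') (S1' := Jo F eta) (S2 := R'')
                   (S2' := Jo F eta) Hf1m (Hids _).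
have E1 := Hf1g _ g1 Hg1.
have E2 := runit_nat Hg1.
rewrite /h -E1; rassoc.
rewrite HL. rewrite (rw2 E2).
by rewrite (comp_assoc ri _ p) (comp_assoc ri _ f1) Hri1 comp_idl.
Qed.
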